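(* Let $(M,(I,C),L)$ be a circuit-generating abstract machine with $M$ well-typed of type $\mathtt{bit}^m$ in a context of variables of type $\mathtt{bit}$, and suppose $(M,(I,C),L)\to_{am}(N,(I,C'),L')$. Let $\vec u=(u_i)_{i\in I}$ be a family of booleans. Then one of the following holds: the rewrite step is one eliminating a boolean constant $\mathtt{tt}$ or $\mathtt{ff}$ and $T(M,(I,C),L)(\vec u)$ is equal to $T(N,(I,C'),L')(\vec u)$; or $T(M,(I,C),L)(\vec u)\to T(N,(I,C'),L')(\vec u)$ in one step of the small-step relation; or $N$ contains the term $\mathtt{Err}$.
   Context: **Language $\mathbf{PCF}^{\mathbf{list}}$.** Terms: $M,N,P::= x \mid \lambda x.M \mid MN \mid \langle M,N\rangle \mid \pi_1(M)\mid\pi_2(M)\mid \mathtt{skip}\mid \mathtt{let}\ \mathtt{skip}=M\ \mathtt{in}\ N \mid \mathtt{tt}\mid\mathtt{ff}\mid \mathtt{if}\ M\ \mathtt{then}\ N\ \mathtt{else}\ P \mid \mathtt{and}\mid\mathtt{xor}\mid\mathtt{not}\mid \mathtt{inj}_1(M)\mid\mathtt{inj}_2(M)\mid \mathtt{match}\ P\ \mathtt{with}\ (x\mapsto M\mid y\mapsto N)\mid \mathtt{split}\mid Y(M)\mid \mathtt{Err}$. Types: $A,B::=\mathtt{bit}\mid A\oplus B\mid A\times B\mid \mathbf 1\mid A\to B\mid [A]$. Typing rules (context $\Delta$): $\Delta,x:A\vdash x:A$; $\mathtt{tt},\mathtt{ff}:\mathtt{bit}$; $\mathtt{skip}:\mathbf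 1$; $\mathtt{Err}:A$ for any $A$; $\mathtt{not}:\mathtt{bit}\to\mathtt{bit}$; $\mathtt{and},\mathtt{xor}:\mathtt{bit}\times\mathtt{bit}\to\mathtt{bit}$; $\mathtt{split}:[A]\to\mathbf 1\oplus(A\times[A])$; the usual rules for $\lambda$, application, pairs, projections, injections, $\mathtt{let}\ \mathtt{skip}$, and $\mathtt{match}$; if $\Delta\vdash M:\mathbf 1\oplus(A\times[A])$ then $\Delta\vdash M:[A]$; if $\Delta\vdash M:A\to A$ then $\Delta\vdash Y(M):A$; $\mathtt{if}\ P\ \mathtt{then}\ M\ \mathtt{else}\ N : C$ when $P:\mathtt{bit}$, $M,N:C$ and $C$ is first-order ($C::=\mathtt{bit}\mid C\times C\mid [C]$). Notation: $[M_1,\ldots,M_n]=\mathtt{inj}_2\langle M_1,\cdots\mathtt{inj}_2\langle M_n,\mathtt{inj}_1(\mathtt{skip})\rangle\rangle$, $\langle M_1,\ldots,M_n\rangle=\langle M_1,\langle\ldots,M_n\rangle\rangle$, $\mathtt{bit}^m$ the $m$-fold right-nested product of $\mathtt{bit}$. **Small-step semantics $\to$:** the smallest relation closed under arbitrary subterm contexts containing $(\lambda x.M)N\to M[N/x]$; $\pi_i\langle M_1,M_2\rangle\to M_i$; $\mathtt{let}\ \mathtt{skip}=\mathtt{skip}\ \mathtt{in}\ M\to M$; $\mathtt{if}\ \mathtt{tt}\ \mathtt{then}\ M\ \mathtt{else}\ N\to M$; $\mathtt{if}\ \mathtt{ff}\ \mathtt{then}\ M\ \mathtt{else}\ N\to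 N$; $\mathtt{split}\,M\to M$; $\mathtt{match}\ \mathtt{inj}_i(P)\ \mathtt{with}\ (x_1\mapsto M_1\mid x_2\mapsto M_2)\to M_i[P/x_i]$; $Y(M)\to M(Y(M))$; and the evident rules computing $\mathtt{not},\mathtt{and},\mathtt{xor}$ on the constants $\mathtt{tt},\mathtt{ff}$. $\mathtt{Err}$ does not reduce. **Reversible circuits.** A gate is $\mathrm{cnot}_i(b_1^{j_1}\ldots b_r^{j_r})$ with $i,j_1,\ldots,j_r$ natural numbers, $i\neq j_k$, $b_k$ booleans (written $\mathrm{not}_i$ if $r=0$); $\mathrm{wires}(C)$ is the set of all indices occurring in the gates of a list $C$. A circuit is $(I,C,O)$ with $C$ a list of gates and $I,O$ sets of wires. Executing $\mathrm{cnot}_i(b_1^{j_1}\ldots b_r^{j_r})$ on a valuation $v$ gives $w$ with $w_l=v_l$ for $l\neq i$ and $w_i=v_i\ \mathtt{xor}\ \bigwedge_{k}(v_{j_k}\ \mathtt{xor}\ b_k\ \mathtt{xor}\ \mathtt{tt})$ ($w_i=\mathtt{not}(v_i)$ if $r=0$). Executing $(I,C,O)$ on $(x_i)_{i\in I}$: set $v_k=x_k$ for $k\in I$ and $v_k=\mathtt{ff}$ otherwise, execute the gates of $C$ in reverse list order, return $(v_k)_{k\in O}$. **Abstract machines.** A circuit-generating abstract machine is $(M,(I,C),L)$ with $p_1:\mathtt{bit},\ldots,p_{n+k}:\mathtt{bit}\vdash M:\mathtt{bit}^m$, $I=\{1,\ldots,n\}$, $C$ a list of gates, $L$ a one-to-one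 map from the free variables of $M$ onto wires in $\mathrm{wires}(C)\cup I$. A first-order extension of $L$ is a term built from variables in the domain of $L$ using tuples and list literals; two have the same shape if both are tuples of equal size or lists of equal length with componentwise same shape. Beta-contexts $E[-]$ are one-hole contexts with the hole in any immediate subterm position of any constructor. $\to_{am}$: $(E[R],RC,L)\to_{am}(E[R'],RC,L)$ for $(\lambda x.M)N\mapsto M[N/x]$, $\pi_i\langle M_1,M_2\rangle\mapsto M_i$, $\mathtt{let}\ \mathtt{skip}=\mathtt{skip}\ \mathtt{in}\ M\mapsto M$, $\mathtt{split}\,M\mapsto M$, $\mathtt{match}\ \mathtt{inj}_i(P)\ldots\mapsto M_i[P/x_i]$, $Y(M)\mapsto M(Y(M))$; and the boolean rules, with $i_0$ a new wire, $p_{i_0}$ fresh, $L'=L\cup\{p_{i_0}\mapsto i_0\}$, $G::(I,C)=(I,G::C)$: $(E[\mathtt{ff}],RC,L)\to_{am}(E[p_{i_0}],RC,L')$; $(E[\mathtt{tt}],RC,L)\to_{am}(E[p_{i_0}],\mathrm{not}_{i_0}::RC,L')$; $(E[\mathtt{not}\ p_i],RC,L)\to_{am}(E[p_{i_0}],\mathrm{cnot}_{i_0}(\mathtt{ff}^{L(p_i)})::RC,L')$; $(E[\mathtt{and}\ p_i\ p_j],RC,L)\to_{am}(E[p_{i_0}],\mathrm{cnot}_{i_0}(\mathtt{tt}^{L(p_i)}\mathtt{tt}^{L(p_j)})::RC,L')$; $(E[\mathtt{xor}\ p_i\ p_j],RC,L)\to_{am}(E[p_{i_0}],\mathrm{cnot}_{i_0}(\mathtt{tt}^{L(p_i)})::\mathrm{cnot}_{i_0}(\mathtt{tt}^{L(p_j)})::RC,L')$;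 and for first-order extensions $V,W$ of $L$ of the same shape, $(E[\mathtt{if}\ p_i\ \mathtt{then}\ V\ \mathtt{else}\ W],RC,L)\to_{am}(E[U],RC',L'')$ where $U$ has the same shape with fresh pairwise-distinct variables $u_1,\ldots,u_r$ mapped by $L''\supseteq L$ to new distinct wires, and, with $v_j,w_j$ the corresponding variables of $V,W$, $RC'$ is $RC$ extended with the gates $\mathrm{cnot}_{u_j}(\mathtt{tt}^{p_i}\mathtt{tt}^{v_j})$ and $\mathrm{cnot}_{u_j}(\mathtt{ff}^{p_i}\mathtt{tt}^{w_j})$ (variables standing for their wires); if $V,W$ do not have the same shape it steps to $E[\mathtt{Err}]$. **Readback.** For $(M,(I,C),L)$ and $\vec u=(u_i)_{i\in I}$, let $v$ be the final valuation from executing $(I,C,\mathrm{Range}(L))$ on $\vec u$; $T(M,(I,C),L)(\vec u)$ is $M$ with each free variable $x$ replaced by the boolean constant $v_{L(x)}$. *)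

(* Defs.v *)
From Stdlib Require Import List Arith Bool.
Import ListNotations.

Inductive ty : Type :=
| TBit : ty
| TSum : ty -> ty -> ty
| TProd : ty -> ty -> ty
| TUnit : ty
| TArr : ty -> ty -> ty
| TList : ty -> ty.

Inductive first_order : ty -> Prop :=
| FO_bit : first_order TBit
| FO_prod : forall A B, first_order A -> first_order B -> first_order (TProd A B)
| FO_list : forall A, first_order A -> first_order (TList A).

Fixpoint bitn (m : nat) : ty :=
  match m with
  | 0 => TUnit
  | 1 => TBit
  | S m' => TProd TBit (bitn m')
  end.

(* Terms.  Bound variables (introduced by lambda and match) are de Bruijn
   indices [BVar]; free variables (the context variables p_i of the machine)
   are named by natural numbers [FVar]. *)
Inductive tm : Type :=
| BVar : nat -> tm
| FVar : nat -> tm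
| Lam : tm -> tm
| App : tm -> tm -> tm
| Pair : tm -> tm -> tm
| Pi1 : tm -> tm
| Pi2 : tm -> tm
| Skip : tm
| LetSkip : tm -> tm -> tm
| Tt : tm
| Ff : tm
| If : tm -> tm -> tm -> tm
| And : tm
| Xor : tm
| Not : tm
| Inj1 : tm -> tm
| Inj2 : tm -> tm
| Match : tm -> tm -> tm -> tm        (* match P with (x |-> M | y |-> N); M, N bind one var *)
| Split : tm
| Y : tm -> tm
| Err : tm.

Definition of_bool (b : bool) : tm := if b then Tt else Ff.

Fixpoint lift (c d : nat) (t : tm) : tm :=
  match t with
  | BVar i => if i <? c then BVar i else BVar (i + d)
  | FVar x => FVar x
  | Lam M => Lam (lift (S c) d M)
  | App M N => App (lift c d M) (lift c d N)
  | Pair M N => Pair (lift c d M) (lift c d N)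
  | Pi1 M => Pi1 (lift c d M)
  | Pi2 M => Pi2 (lift c d M)
  | Skip => Skip
  | LetSkip M N => LetSkip (lift c d M) (lift c d N)
  | Tt => Tt
  | Ff => Ff
  | If P M N => If (lift c d P) (lift c d M) (lift c d N)
  | And => And
  | Xor => Xor
  | Not => Not
  | Inj1 M => Inj1 (lift c d M)
  | Inj2 M => Inj2 (lift c d M)
  | Match P M N => Match (lift c d P) (lift (S c) d M) (lift (S c) d N)
  | Split => Split
  | Y M => Y (lift c d M)
  | Err => Err
  end.

Fixpoint subst (k : nat) (N : tm) (t : tm) : tm :=
  match t with
  | BVar i => if i <? k then BVar i else if i =? k then lift 0 k N else BVar (i - 1)
  | FVar x => FVar x
  | Lam M => Lam (subst (S k) N M)
  | App M1 M2 => App (subst k N M1) (subst k N M2)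
  | Pair M1 M2 => Pair (subst k N M1) (subst k N M2)
  | Pi1 M => Pi1 (subst k N M)
  | Pi2 M => Pi2 (subst k N M)
  | Skip => Skip
  | LetSkip M1 M2 => LetSkip (subst k N M1) (subst k N M2)
  | Tt => Tt
  | Ff => Ff
  | If P M1 M2 => If (subst k N P) (subst k N M1) (subst k N M2)
  | And => And
  | Xor => Xor
  | Not => Not
  | Inj1 M => Inj1 (subst k N M)
  | Inj2 M => Inj2 (subst k N M)
  | Match P M1 M2 => Match (subst k N P) (subst (S k) N M1) (subst (S k) N M2)
  | Split => Split
  | Y M => Y (subst k N M)
  | Err => Err
  end.

Definition subst0 (N M : tm) : tm := subst 0 N M.

(* Typing:  Delta (free variables) ; Gamma (bound variables) |- M : A *)
Inductive has_type (Delta : nat -> option ty) : list ty -> tm -> ty -> Prop :=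
| T_BVar : forall G i A, nth_error G i = Some A -> has_type Delta G (BVar i) A
| T_FVar : forall G x A, Delta x = Some A -> has_type Delta G (FVar x) A
| T_Lam : forall G M A B, has_type Delta (A :: G) M B -> has_type Delta G (Lam M) (TArr A B)
| T_App : forall G M N A B, has_type Delta G M (TArr A B) -> has_type Delta G N A ->
    has_type Delta G (App M N) B
| T_Pair : forall G M N A B, has_type Delta G M A -> has_type Delta G N B ->
    has_type Delta G (Pair M N) (TProd A B)
| T_Pi1 : forall G M A B, has_type Delta G M (TProd A B) -> has_type Delta G (Pi1 M) A
| T_Pi2 : forall G M A B, has_type Delta G M (TProd A B) -> has_type Delta G (Pi2 M) B
| T_Skip : forall G, has_type Delta G Skip TUnit
| T_LetSkip : forall G M N A, has_type Delta G M TUnit -> has_type Delta G N A ->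
    has_type Delta G (LetSkip M N) A
| T_Tt : forall G, has_type Delta G Tt TBit
| T_Ff : forall G, has_type Delta G Ff TBit
| T_If : forall G P M N A, has_type Delta G P TBit -> has_type Delta G M A ->
    has_type Delta G N A -> first_order A -> has_type Delta G (If P M N) A
| T_And : forall G, has_type Delta G And (TArr (TProd TBit TBit) TBit)
| T_Xor : forall G, has_type Delta G Xor (TArr (TProd TBit TBit) TBit)
| T_Not : forall G, has_type Delta G Not (TArr TBit TBit)
| T_Inj1 : forall G M A B, has_type Delta G M A -> has_type Delta G (Inj1 M) (TSum A B)
| T_Inj2 : forall G M A B, has_type Delta G M B -> has_type Delta G (Inj2 M) (TSum A B)
| T_Match : forall G P M N A B C, has_type Delta G P (TSum A B) ->
    has_type Delta (A :: G) M C -> has_type Delta (B :: G) N C ->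
    has_type Delta G (Match P M N) C
| T_Split : forall G A,
    has_type Delta G Split (TArr (TList A) (TSum TUnit (TProd A (TList A))))
| T_List : forall G M A, has_type Delta G M (TSum TUnit (TProd A (TList A))) ->
    has_type Delta G M (TList A)
| T_Y : forall G M A, has_type Delta G M (TArr A A) -> has_type Delta G (Y M) A
| T_Err : forall G A, has_type Delta G Err A.

(* One-hole contexts (hole in any subterm position, including under binders) *)
Inductive ctx : Type :=
| Hole : ctx
| CLam : ctx -> ctx
| CAppL : ctx -> tm -> ctx
| CAppR : tm -> ctx -> ctx
| CPairL : ctx -> tm -> ctx
| CPairR : tm -> ctx -> ctx
| CPi1 : ctx -> ctx
| CPi2 : ctx -> ctx
| CLetL : ctx -> tm -> ctx
| CLetR : tm -> ctx -> ctx
| CIf1 : ctx -> tm -> tm -> ctx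
| CIf2 : tm -> ctx -> tm -> ctx
| CIf3 : tm -> tm -> ctx -> ctx
| CInj1 : ctx -> ctx
| CInj2 : ctx -> ctx
| CMatch1 : ctx -> tm -> tm -> ctx
| CMatch2 : tm -> ctx -> tm -> ctx
| CMatch3 : tm -> tm -> ctx -> ctx
| CY : ctx -> ctx.

Fixpoint fill (E : ctx) (R : tm) : tm :=
  match E with
  | Hole => R
  | CLam E => Lam (fill E R)
  | CAppL E N => App (fill E R) N
  | CAppR M E => App M (fill E R)
  | CPairL E N => Pair (fill E R) N
  | CPairR M E => Pair M (fill E R)
  | CPi1 E => Pi1 (fill E R)
  | CPi2 E => Pi2 (fill E R)
  | CLetL E N => LetSkip (fill E R) N
  | CLetR M E => LetSkip M (fill E R)
  | CIf1 E M N => If (fill E R) M N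
  | CIf2 P E N => If P (fill E R) N
  | CIf3 P M E => If P M (fill E R)
  | CInj1 E => Inj1 (fill E R)
  | CInj2 E => Inj2 (fill E R)
  | CMatch1 E M N => Match (fill E R) M N
  | CMatch2 P E N => Match P (fill E R) N
  | CMatch3 P M E => Match P M (fill E R)
  | CY E => Y (fill E R)
  end.

Definition contains_err (M : tm) : Prop := exists E, M = fill E Err.

(* the "structural" rules shared by -> and ->am *)
Inductive pure_red : tm -> tm -> Prop :=
| R_beta : forall M N, pure_red (App (Lam M) N) (subst0 N M)
| R_pi1 : forall M1 M2, pure_red (Pi1 (Pair M1 M2)) M1
| R_pi2 : forall M1 M2, pure_red (Pi2 (Pair M1 M2)) M2
| R_let : forall M, pure_red (LetSkip Skip M) M
| R_split : forall M, pure_red (App Split M) M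
| R_match1 : forall P M1 M2, pure_red (Match (Inj1 P) M1 M2) (subst0 P M1)
| R_match2 : forall P M1 M2, pure_red (Match (Inj2 P) M1 M2) (subst0 P M2)
| R_Y : forall M, pure_red (Y M) (App M (Y M)).

Inductive head_red : tm -> tm -> Prop :=
| H_pure : forall M N, pure_red M N -> head_red M N
| H_if_tt : forall M N, head_red (If Tt M N) M
| H_if_ff : forall M N, head_red (If Ff M N) N
| H_not : forall b, head_red (App Not (of_bool b)) (of_bool (negb b))
| H_and : forall b1 b2,
    head_red (App And (Pair (of_bool b1) (of_bool b2))) (of_bool (b1 && b2))
| H_xor : forall b1 b2,
    head_red (App Xor (Pair (of_bool b1) (of_bool b2))) (of_bool (xorb b1 b2)).

Definition step (M N : tm) : Prop :=
  exists E R R', M = fill E R /\ N = fill E R' /\ head_red R R'.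

(* Gate i [(b1,j1);...;(br,jr)] is cnot_i(b1^j1 ... br^jr) *)
Inductive gate : Type := Gate : nat -> list (bool * nat) -> gate.

Definition gate_wires (g : gate) : list nat :=
  let (i, cs) := g in i :: map snd cs.

Definition gate_wf (g : gate) : Prop :=
  let (i, cs) := g in forall b j, In (b, j) cs -> i <> j.

Definition wires (C : list gate) : list nat := flat_map gate_wires C.

Definition valuation := nat -> bool.

Definition exec_gate (g : gate) (v : valuation) : valuation :=
  let (i, cs) := g in
  fun l => if l =? i then
             xorb (v i) (forallb (fun bj => xorb (xorb (v (snd bj)) (fst bj)) true) cs)
           else v l.

(* input wires I = {1,...,n} *)
Definition in_I (n w : nat) : Prop := 1 <= w <= n.

(* final valuation obtained by executing (I, C, _) on the inputs (u_i)_{i in I}: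
   inputs set on I, ff elsewhere; the gates of C run in reverse list order *)
Definition run (n : nat) (C : list gate) (u : nat -> bool) : valuation :=
  fold_right exec_gate (fun k => if (1 <=? k) && (k <=? n) then u k else false) C.

Definition lmap := nat -> option nat.

Definition upd (L : lmap) (x w : nat) : lmap :=
  fun y => if y =? x then Some w else L y.

Definition ctx_of (L : lmap) : nat -> option ty :=
  fun x => match L x with Some _ => Some TBit | None => None end.

Definition new_wire (n : nat) (C : list gate) (L : lmap) (w : nat) : Prop :=
  ~ In w (wires C) /\ ~ in_I n w /\ (forall x, L x <> Some w).

Definition fresh_var (L : lmap) (x : nat) : Prop := L x = None.

Inductive foe (L : lmap) : tm -> Prop :=
| Foe_var : forall x w, L x = Some w -> foe L (FVar x)
| Foe_pair : forall V W, foe L V -> foe L W -> foe L (Pair V W)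
| Foe_list : forall V, foe_list L V -> foe L V
with foe_list (L : lmap) : tm -> Prop :=
| Foe_nil : foe_list L (Inj1 Skip)
| Foe_cons : forall V l, foe L V -> foe_list L l -> foe_list L (Inj2 (Pair V l)).

Inductive same_shape : tm -> tm -> Prop :=
| SS_var : forall x y, same_shape (FVar x) (FVar y)
| SS_pair : forall V1 V2 W1 W2, same_shape V1 W1 -> same_shape V2 W2 ->
    same_shape (Pair V1 V2) (Pair W1 W2)
| SS_nil : same_shape (Inj1 Skip) (Inj1 Skip)
| SS_cons : forall V l W l', same_shape V W -> same_shape l l' ->
    same_shape (Inj2 (Pair V l)) (Inj2 (Pair W l')).

(* if_gen n C c V W L0 U G L1 : building the output U of
   [if p then V else W] (c = L(p)), with fresh pairwise-distinct variables
   mapped to new distinct wires (L1 extends L0), and G the generated gates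
   cnot_u(tt^p tt^v), cnot_u(ff^p tt^w) for each position. *)
Inductive if_gen (n : nat) (C : list gate) (c : nat) :
  tm -> tm -> lmap -> tm -> list gate -> lmap -> Prop :=
| IG_var : forall x y wx wy L0 z w,
    L0 x = Some wx -> L0 y = Some wy ->
    fresh_var L0 z -> new_wire n C L0 w ->
    if_gen n C c (FVar x) (FVar y) L0 (FVar z)
      [Gate w [(true, c); (true, wx)]; Gate w [(false, c); (true, wy)]] (upd L0 z w)
| IG_pair : forall V1 V2 W1 W2 L0 U1 G1 L1 U2 G2 L2,
    if_gen n C c V1 W1 L0 U1 G1 L1 -> if_gen n C c V2 W2 L1 U2 G2 L2 ->
    if_gen n C c (Pair V1 V2) (Pair W1 W2) L0 (Pair U1 U2) (G1 ++ G2) L2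
| IG_nil : forall L0,
    if_gen n C c (Inj1 Skip) (Inj1 Skip) L0 (Inj1 Skip) [] L0
| IG_cons : forall V l W l' L0 U G1 L1 lu G2 L2,
    if_gen n C c V W L0 U G1 L1 -> if_gen n C c l l' L1 lu G2 L2 ->
    if_gen n C c (Inj2 (Pair V l)) (Inj2 (Pair W l')) L0 (Inj2 (Pair U lu)) (G1 ++ G2) L2.

Inductive step_kind : Type := KConst | KOther.

Inductive am_head (n : nat) :
  step_kind -> tm -> list gate -> lmap -> tm -> list gate -> lmap -> Prop :=
| AM_pure : forall R R' C L, pure_red R R' -> am_head n KOther R C L R' C L
| AM_ff : forall C L z w, fresh_var L z -> new_wire n C L w ->
    am_head n KConst Ff C L (FVar z) C (upd L z w)
| AM_tt : forall C L z w, fresh_var L z -> new_wire n C L w ->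
    am_head n KConst Tt C L (FVar z) (Gate w [] :: C) (upd L z w)
| AM_not : forall C L p wp z w, L p = Some wp -> fresh_var L z -> new_wire n C L w ->
    am_head n KOther (App Not (FVar p)) C L (FVar z)
      (Gate w [(false, wp)] :: C) (upd L z w)
| AM_and : forall C L p q wp wq z w, L p = Some wp -> L q = Some wq ->
    fresh_var L z -> new_wire n C L w ->
    am_head n KOther (App And (Pair (FVar p) (FVar q))) C L (FVar z)
      (Gate w [(true, wp); (true, wq)] :: C) (upd L z w)
| AM_xor : forall C L p q wp wq z w, L p = Some wp -> L q = Some wq ->
    fresh_var L z -> new_wire n C L w ->
    am_head n KOther (App Xor (Pair (FVar p) (FVar q))) C L (FVar z)
      (Gate w [(true, wp)] :: Gate w [(true, wq)] :: C) (upd L z w)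
| AM_if : forall C L p wp V W U G L'',
    L p = Some wp -> foe L V -> foe L W -> same_shape V W ->
    if_gen n C wp V W L U G L'' ->
    am_head n KOther (If (FVar p) V W) C L U (G ++ C) L''
| AM_if_err : forall C L p wp V W,
    L p = Some wp -> foe L V -> foe L W -> ~ same_shape V W ->
    am_head n KOther (If (FVar p) V W) C L Err C L.

Definition am_step (n : nat) (k : step_kind) (M : tm) (C : list gate) (L : lmap)
    (N : tm) (C' : list gate) (L' : lmap) : Prop :=
  exists E R R', M = fill E R /\ N = fill E R' /\ am_head n k R C L R' C' L'.

Definition cgam (n : nat) (M : tm) (C : list gate) (L : lmap) (m : nat) : Prop :=
  has_type (ctx_of L) [] M (bitn m) /\
  (exists dom : list nat, forall x, L x <> None <-> In x dom) /\
  (forall x y w, L x = Some w -> L y = Some w -> x = y) /\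
  (forall x w, L x = Some w -> In w (wires C) \/ in_I n w) /\
  (forall g, In g C -> gate_wf g).

Fixpoint replace_fv (f : nat -> option bool) (t : tm) : tm :=
  match t with
  | BVar i => BVar i
  | FVar x => match f x with Some b => of_bool b | None => FVar x end
  | Lam M => Lam (replace_fv f M)
  | App M N => App (replace_fv f M) (replace_fv f N)
  | Pair M N => Pair (replace_fv f M) (replace_fv f N)
  | Pi1 M => Pi1 (replace_fv f M)
  | Pi2 M => Pi2 (replace_fv f M)
  | Skip => Skip
  | LetSkip M N => LetSkip (replace_fv f M) (replace_fv f N)
  | Tt => Tt
  | Ff => Ff
  | If P M N => If (replace_fv f P) (replace_fv f M) (replace_fv f N)
  | And => And
  | Xor => Xor
  | Not => Not
  | Inj1 M => Inj1 (replace_fv f M)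
  | Inj2 M => Inj2 (replace_fv f M)
  | Match P M N => Match (replace_fv f P) (replace_fv f M) (replace_fv f N)
  | Split => Split
  | Y M => Y (replace_fv f M)
  | Err => Err
  end.

Definition readback (n : nat) (C : list gate) (L : lmap) (M : tm) (u : nat -> bool) : tm :=
  let v := run n C u in
  replace_fv (fun x => match L x with Some w => Some (v w) | None => None end) M.

(* Main.v *)
Require Import Defs.
From Stdlib Require Import List Arith Bool.
Import ListNotations.

Fixpoint fvs (t : tm) : list nat :=
  match t with
  | BVar _ => []
  | FVar x => [x]
  | Lam M => fvs M
  | App M N => fvs M ++ fvs N
  | Pair M N => fvs M ++ fvs N
  | Pi1 M => fvs M
  | Pi2 M => fvs M
  | Skip => []
  | LetSkip M N => fvs M ++ fvs N
  | Tt => [] | Ff => []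
  | If P M N => fvs P ++ fvs M ++ fvs N
  | And => [] | Xor => [] | Not => []
  | Inj1 M => fvs M
  | Inj2 M => fvs M
  | Match P M N => fvs P ++ fvs M ++ fvs N
  | Split => []
  | Y M => fvs M
  | Err => []
  end.

Fixpoint ctx_fvs (E : ctx) : list nat :=
  match E with
  | Hole => []
  | CLam E => ctx_fvs E
  | CAppL E N => ctx_fvs E ++ fvs N
  | CAppR M E => fvs M ++ ctx_fvs E
  | CPairL E N => ctx_fvs E ++ fvs N
  | CPairR M E => fvs M ++ ctx_fvs E
  | CPi1 E => ctx_fvs E
  | CPi2 E => ctx_fvs E
  | CLetL E N => ctx_fvs E ++ fvs N
  | CLetR M E => fvs M ++ ctx_fvs E
  | CIf1 E M N => ctx_fvs E ++ fvs M ++ fvs N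
  | CIf2 P E N => fvs P ++ ctx_fvs E ++ fvs N
  | CIf3 P M E => fvs P ++ fvs M ++ ctx_fvs E
  | CInj1 E => ctx_fvs E
  | CInj2 E => ctx_fvs E
  | CMatch1 E M N => ctx_fvs E ++ fvs M ++ fvs N
  | CMatch2 P E N => fvs P ++ ctx_fvs E ++ fvs N
  | CMatch3 P M E => fvs P ++ fvs M ++ ctx_fvs E
  | CY E => ctx_fvs E
  end.

Fixpoint ctx_rfv (f : nat -> option bool) (E : ctx) : ctx :=
  match E with
  | Hole => Hole
  | CLam E => CLam (ctx_rfv f E)
  | CAppL E N => CAppL (ctx_rfv f E) (replace_fv f N)
  | CAppR M E => CAppR (replace_fv f M) (ctx_rfv f E)
  | CPairL E N => CPairL (ctx_rfv f E) (replace_fv f N)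
  | CPairR M E => CPairR (replace_fv f M) (ctx_rfv f E)
  | CPi1 E => CPi1 (ctx_rfv f E)
  | CPi2 E => CPi2 (ctx_rfv f E)
  | CLetL E N => CLetL (ctx_rfv f E) (replace_fv f N)
  | CLetR M E => CLetR (replace_fv f M) (ctx_rfv f E)
  | CIf1 E M N => CIf1 (ctx_rfv f E) (replace_fv f M) (replace_fv f N)
  | CIf2 P E N => CIf2 (replace_fv f P) (ctx_rfv f E) (replace_fv f N)
  | CIf3 P M E => CIf3 (replace_fv f P) (replace_fv f M) (ctx_rfv f E)
  | CInj1 E => CInj1 (ctx_rfv f E)
  | CInj2 E => CInj2 (ctx_rfv f E)
  | CMatch1 E M N => CMatch1 (ctx_rfv f E) (replace_fv f M) (replace_fv f N)
  | CMatch2 P E N => CMatch2 (replace_fv f P) (ctx_rfv f E) (replace_fv f N)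
  | CMatch3 P M E => CMatch3 (replace_fv f P) (replace_fv f M) (ctx_rfv f E)
  | CY E => CY (ctx_rfv f E)
  end.

Lemma fvs_fill E R x : In x (ctx_fvs E) \/ In x (fvs R) -> In x (fvs (fill E R)).
Proof. induction E; simpl; rewrite ?in_app_iff; intuition. Qed.

Lemma rfv_fill f E R : replace_fv f (fill E R) = fill (ctx_rfv f E) (replace_fv f R).
Proof. induction E; simpl; congruence. Qed.

Lemma rfv_ext t : forall f g, (forall x, In x (fvs t) -> f x = g x) ->
  replace_fv f t = replace_fv g t.
Proof.
  induction t; simpl; intros f g H; try reflexivity;
  try (rewrite H by auto; reflexivity);
  f_equal; try (first [apply IHt | apply IHt1 | apply IHt2 | apply IHt3]);
  intros; apply H; rewrite ?in_app_iff; tauto.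
Qed.

Lemma ctx_rfv_ext E : forall f g, (forall x, In x (ctx_fvs E) -> f x = g x) ->
  ctx_rfv f E = ctx_rfv g E.
Proof.
  induction E; simpl; intros f g H; try reflexivity;
  f_equal; try apply IHE; try apply rfv_ext;
  intros; apply H; rewrite ?in_app_iff; tauto.
Qed.

Lemma rfv_lift f t : forall c d, replace_fv f (lift c d t) = lift c d (replace_fv f t).
Proof.
  induction t; simpl; intros; try congruence.
  - destruct (n <? c); reflexivity.
  - destruct (f n) as [[]|]; reflexivity.
Qed.

Lemma rfv_subst f t : forall k N,
  replace_fv f (subst k N t) = subst k (replace_fv f N) (replace_fv f t).
Proof.
  induction t; simpl; intros; try congruence.
  - destruct (n <? k); [reflexivity|]. destruct (n =? k); [apply rfv_lift|reflexivity].
  - destruct (f n) as [[]|]; reflexivity.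
Qed.

Lemma pure_rfv f R R' : pure_red R R' -> pure_red (replace_fv f R) (replace_fv f R').
Proof.
  intros H; destruct H; simpl; unfold subst0; rewrite ?rfv_subst; constructor.
Qed.

Lemma typed_fvs D G t A : has_type D G t A -> forall x, In x (fvs t) -> D x <> None.
Proof.
  induction 1; simpl; intros y Hy; rewrite ?in_app_iff in Hy; try tauto;
  try (destruct Hy as [<-|[]]; congruence); firstorder.
Qed.

Definition fL (L : lmap) (v : valuation) : nat -> option bool :=
  fun x => match L x with Some w => Some (v w) | None => None end.

Lemma readback_eq n C L M u : readback n C L M u = replace_fv (fL L (run n C u)) M.
Proof. reflexivity. Qed.

Definition targets (G : list gate) : list nat := map (fun g => match g with Gate i _ => i end) G.

Lemma exec_other i cs v l : l <> i -> exec_gate (Gate i cs) v l = v l.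
Proof. intros H; simpl. rewrite (proj2 (Nat.eqb_neq _ _) H). reflexivity. Qed.

Lemma fold_other G v t : ~ In t (targets G) -> fold_right exec_gate v G t = v t.
Proof.
  induction G as [|[i cs] G IH]; simpl; intros H; auto.
  change (exec_gate (Gate i cs) (fold_right exec_gate v G) t = v t).
  rewrite exec_other by (intro; apply H; left; auto). apply IH; tauto.
Qed.

Lemma run_new n C u w : ~ In w (wires C) -> ~ in_I n w -> run n C u w = false.
Proof.
  unfold run. induction C as [|[i cs] C IH]; cbn [fold_right]; intros Hw Hi; simpl in Hw.
  - case_eq ((1 <=? w) && (w <=? n)); intro Hb; [|reflexivity].
    apply andb_true_iff in Hb; destruct Hb as [H1 H2].
    apply Nat.leb_le in H1; apply Nat.leb_le in H2. exfalso; apply Hi; split; auto.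
  - change (exec_gate (Gate i cs) (fold_right exec_gate
      (fun k : nat => if (1 <=? k) && (k <=? n) then u k else false) C) w = false).
    rewrite exec_other by (intro; apply Hw; left; auto).
    apply IH; auto. intro; apply Hw; right; apply in_app_iff; auto.
Qed.

Lemma run_cons n g C u : run n (g :: C) u = exec_gate g (run n C u).
Proof. reflexivity. Qed.

Lemma run_app n G C u : run n (G ++ C) u = fold_right exec_gate (run n C u) G.
Proof. unfold run. apply fold_right_app. Qed.

Lemma targets_app G1 G2 : targets (G1 ++ G2) = targets G1 ++ targets G2.
Proof. apply map_app. Qed.

Lemma tm_frame L v L' v' t :
  (forall x, In x (fvs t) -> L x <> None) ->
  (forall x w, L x = Some w -> L' x = Some w /\ v' w = v w) ->
  replace_fv (fL L' v') t = replace_fv (fL L v) t.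
Proof.
  intros Hd Hf. apply rfv_ext. intros x Hx. unfold fL.
  destruct (L x) eqn:Hl; [destruct (Hf _ _ Hl) as [-> ->]; reflexivity|].
  exfalso; apply (Hd x Hx Hl).
Qed.

Lemma ctx_frame L v L' v' E :
  (forall x, In x (ctx_fvs E) -> L x <> None) ->
  (forall x w, L x = Some w -> L' x = Some w /\ v' w = v w) ->
  ctx_rfv (fL L' v') E = ctx_rfv (fL L v) E.
Proof.
  intros Hd Hf. apply ctx_rfv_ext. intros x Hx. unfold fL.
  destruct (L x) eqn:Hl; [destruct (Hf _ _ Hl) as [-> ->]; reflexivity|].
  exfalso; apply (Hd x Hx Hl).
Qed.

Lemma frame_upd (L : lmap) z w (v v' : valuation) : fresh_var L z -> (forall x, L x <> Some w) ->
  (forall t, t <> w -> v' t = v t) ->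
  forall x w0, L x = Some w0 -> upd L z w x = Some w0 /\ v' w0 = v w0.
Proof.
  intros Hz Hw Hv x w0 H. unfold upd. destruct (x =? z) eqn:E.
  - apply Nat.eqb_eq in E; subst. unfold fresh_var in Hz; congruence.
  - split; auto. apply Hv. intro; subst. apply (Hw x H).
Qed.

Lemma if_gen_props n C c V W L0 U G L1 : if_gen n C c V W L0 U G L1 ->
 (forall x w, L0 x = Some w -> L1 x = Some w) /\
 (forall t, In t (targets G) -> (forall x, L0 x <> Some t) /\ ~ In t (wires C) /\
     ~ in_I n t /\ exists x, L1 x = Some t) /\
 (forall x, In x (fvs U) -> exists t, L1 x = Some t /\ In t (targets G)).
Proof.
  induction 1 as [x y wx wy L0 z w Hx Hy Hz Hw
                 | V1 V2 W1 W2 L0 U1 G1 L1 U2 G2 L2 H1 [E1 [T1 F1]] H2 [E2 [T2 F2]]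
                 | L0
                 | V1 V2 W1 W2 L0 U1 G1 L1 U2 G2 L2 H1 [E1 [T1 F1]] H2 [E2 [T2 F2]]].
  - destruct Hw as (A & B & D). split; [|split].
    + intros x0 w0 H0. unfold upd. destruct (x0 =? z) eqn:E; auto.
      apply Nat.eqb_eq in E; subst. unfold fresh_var in Hz; congruence.
    + intros t Ht. simpl in Ht. assert (t = w) by (destruct Ht as [<-|[<-|[]]]; auto); subst.
      repeat split; auto. exists z; unfold upd; rewrite Nat.eqb_refl; auto.
    + intros x0 Hx0; simpl in Hx0; destruct Hx0 as [<-|[]].
      exists w; unfold upd; rewrite Nat.eqb_refl; split; simpl; auto.
  - split; [|split].
    + auto.
    + intros t Ht. rewrite targets_app, in_app_iff in Ht. destruct Ht as [Ht|Ht].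
      * destruct (T1 t Ht) as (A & B & D & x & Hx). repeat split; auto. exists x; auto.
      * destruct (T2 t Ht) as (A & B & D & Hx). repeat split; auto.
        intros x Hx'. apply (A x). auto.
    + intros x Hx. simpl in Hx. rewrite in_app_iff in Hx. destruct Hx as [Hx|Hx].
      * destruct (F1 x Hx) as (t & A & B). exists t; split; auto.
        rewrite targets_app, in_app_iff; auto.
      * destruct (F2 x Hx) as (t & A & B). exists t; split; auto.
        rewrite targets_app, in_app_iff; auto.
  - simpl. repeat split; try tauto.
  - split; [|split].
    + auto.
    + intros t Ht. rewrite targets_app, in_app_iff in Ht. destruct Ht as [Ht|Ht].
      * destruct (T1 t Ht) as (A & B & D & x & Hx). repeat split; auto. exists x; auto.
      * destruct (T2 t Ht) as (A & B & D & Hx). repeat split; auto.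
        intros x Hx'. apply (A x). auto.
    + intros x Hx. simpl in Hx. rewrite in_app_iff in Hx. destruct Hx as [Hx|Hx].
      * destruct (F1 x Hx) as (t & A & B). exists t; split; auto.
        rewrite targets_app, in_app_iff; auto.
      * destruct (F2 x Hx) as (t & A & B). exists t; split; auto.
        rewrite targets_app, in_app_iff; auto.
Qed.

Lemma if_gen_sem n C c V W L0 U G L1 : if_gen n C c V W L0 U G L1 ->
 forall v, (exists p, L0 p = Some c) ->
 (forall x, In x (fvs V) \/ In x (fvs W) -> L0 x <> None) ->
 (forall t, In t (targets G) -> v t = false) ->
 replace_fv (fL L1 (fold_right exec_gate v G)) U =
   if v c then replace_fv (fL L0 v) V else replace_fv (fL L0 v) W.
Proof.
  intros H; pose proof (if_gen_props _ _ _ _ _ _ _ _ _ H) as Props; revert Props.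
  induction H as [x y wx wy L0 z w Hx Hy Hz Hw
                 | V1 V2 W1 W2 L0 U1 G1 L1 U2 G2 L2 H1 IH1 H2 IH2
                 | L0
                 | V1 V2 W1 W2 L0 U1 G1 L1 U2 G2 L2 H1 IH1 H2 IH2];
  intros Props v [p Hp] Hdom Hfalse.
  - destruct Hw as (A & B & D).
    assert (Hvw : v w = false) by (apply Hfalse; simpl; auto).
    assert (Hc : c =? w = false) by (apply Nat.eqb_neq; intro; subst; apply (D p Hp)).
    assert (Hwx : wx =? w = false) by (apply Nat.eqb_neq; intro; subst; apply (D x Hx)).
    assert (Hwy : wy =? w = false) by (apply Nat.eqb_neq; intro; subst; apply (D y Hy)).
    simpl. unfold fL, upd. rewrite Nat.eqb_refl, Hx, Hy. simpl.
    rewrite ?Nat.eqb_refl, ?Hc, ?Hwx, ?Hwy, ?Hvw.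
    destruct (v c), (v wx), (v wy); reflexivity.
  - destruct (if_gen_props _ _ _ _ _ _ _ _ _ H1) as (E1 & T1 & F1).
    destruct (if_gen_props _ _ _ _ _ _ _ _ _ H2) as (E2 & T2 & F2).
    rewrite fold_right_app. simpl.
    set (v2 := fold_right exec_gate v G2).
    assert (Hv2 : forall t x, L1 x = Some t -> v2 t = v t).
    { intros t x Hxt. apply fold_other. intro Ht. apply (proj1 (T2 t Ht) x Hxt). }
    assert (Hg1 : forall t, In t (targets G1) -> ~ In t (targets G2)).
    { intros t Ht Ht2. destruct (T1 t Ht) as (_ & _ & _ & x & Hxt).
      apply (proj1 (T2 t Ht2) x Hxt). }
    assert (R1 : replace_fv (fL L2 (fold_right exec_gate v2 G1)) U1 =
                 replace_fv (fL L1 (fold_right exec_gate v2 G1)) U1).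
    { apply rfv_ext. intros x Hx. destruct (F1 x Hx) as (t & A & _).
      unfold fL. rewrite A, (E2 _ _ A). reflexivity. }
    rewrite R1, IH1; auto.
    2:{ exists p; auto. }
    2:{ intros x Hx. apply Hdom. simpl; rewrite !in_app_iff; tauto. }
    2:{ intros t Ht. unfold v2. rewrite fold_other by (apply Hg1; auto). apply Hfalse.
        rewrite targets_app, in_app_iff; auto. }
    assert (R2 : replace_fv (fL L2 (fold_right exec_gate v2 G1)) U2 =
                 replace_fv (fL L2 v2) U2).
    { apply rfv_ext. intros x Hx. destruct (F2 x Hx) as (t & A & B).
      unfold fL. rewrite A, fold_other; auto. intro Ht; apply (Hg1 t Ht B). }
    rewrite R2. unfold v2. rewrite IH2; auto.
    2:{ exists p; auto. }
    2:{ intros x Hx Hn. destruct (L0 x) eqn:Hl.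
        - rewrite (E1 _ _ Hl) in Hn; discriminate.
        - apply (Hdom x); auto. simpl; rewrite !in_app_iff; tauto. }
    2:{ intros t Ht. apply Hfalse. rewrite targets_app, in_app_iff; auto. }
    fold v2. rewrite (Hv2 c p) by auto.
    assert (Hs : forall T, (forall x, In x (fvs T) -> L0 x <> None) ->
      replace_fv (fL L0 v2) T = replace_fv (fL L0 v) T /\
      replace_fv (fL L1 v) T = replace_fv (fL L0 v) T).
    { intros T HT; split; apply rfv_ext; intros x Hx; unfold fL;
      destruct (L0 x) eqn:Hl; try (exfalso; apply (HT x Hx Hl)).
      - rewrite (Hv2 n0 x); auto.
      - rewrite (E1 _ _ Hl); auto. }
    assert (D1 : forall x, In x (fvs V1) -> L0 x <> None)
      by (intros x Hx; apply Hdom; simpl; rewrite !in_app_iff; tauto).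
    assert (D2 : forall x, In x (fvs W1) -> L0 x <> None)
      by (intros x Hx; apply Hdom; simpl; rewrite !in_app_iff; tauto).
    assert (D3 : forall x, In x (fvs V2) -> L0 x <> None)
      by (intros x Hx; apply Hdom; simpl; rewrite !in_app_iff; tauto).
    assert (D4 : forall x, In x (fvs W2) -> L0 x <> None)
      by (intros x Hx; apply Hdom; simpl; rewrite !in_app_iff; tauto).
    rewrite (proj1 (Hs V1 D1)), (proj1 (Hs W1 D2)), (proj2 (Hs V2 D3)), (proj2 (Hs W2 D4)).
    destruct (v c); reflexivity.
  - simpl. destruct (v c); reflexivity.
  - destruct (if_gen_props _ _ _ _ _ _ _ _ _ H1) as (E1 & T1 & F1).
    destruct (if_gen_props _ _ _ _ _ _ _ _ _ H2) as (E2 & T2 & F2).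
    rewrite fold_right_app. simpl.
    set (v2 := fold_right exec_gate v G2).
    assert (Hv2 : forall t x, L1 x = Some t -> v2 t = v t).
    { intros t x Hxt. apply fold_other. intro Ht. apply (proj1 (T2 t Ht) x Hxt). }
    assert (Hg1 : forall t, In t (targets G1) -> ~ In t (targets G2)).
    { intros t Ht Ht2. destruct (T1 t Ht) as (_ & _ & _ & x & Hxt).
      apply (proj1 (T2 t Ht2) x Hxt). }
    assert (R1 : replace_fv (fL L2 (fold_right exec_gate v2 G1)) U1 =
                 replace_fv (fL L1 (fold_right exec_gate v2 G1)) U1).
    { apply rfv_ext. intros x Hx. destruct (F1 x Hx) as (t & A & _).
      unfold fL. rewrite A, (E2 _ _ A). reflexivity. }
    rewrite R1, IH1; auto.
    2:{ exists p; auto. }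
    2:{ intros x Hx. apply Hdom. simpl; rewrite !in_app_iff; tauto. }
    2:{ intros t Ht. unfold v2. rewrite fold_other by (apply Hg1; auto). apply Hfalse.
        rewrite targets_app, in_app_iff; auto. }
    assert (R2 : replace_fv (fL L2 (fold_right exec_gate v2 G1)) U2 =
                 replace_fv (fL L2 v2) U2).
    { apply rfv_ext. intros x Hx. destruct (F2 x Hx) as (t & A & B).
      unfold fL. rewrite A, fold_other; auto. intro Ht; apply (Hg1 t Ht B). }
    rewrite R2. unfold v2. rewrite IH2; auto.
    2:{ exists p; auto. }
    2:{ intros x Hx Hn. destruct (L0 x) eqn:Hl.
        - rewrite (E1 _ _ Hl) in Hn; discriminate.
        - apply (Hdom x); auto. simpl; rewrite !in_app_iff; tauto. }
    2:{ intros t Ht. apply Hfalse. rewrite targets_app, in_app_iff; auto. }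
    fold v2. rewrite (Hv2 c p) by auto.
    assert (Hs : forall T, (forall x, In x (fvs T) -> L0 x <> None) ->
      replace_fv (fL L0 v2) T = replace_fv (fL L0 v) T /\
      replace_fv (fL L1 v) T = replace_fv (fL L0 v) T).
    { intros T HT; split; apply rfv_ext; intros x Hx; unfold fL;
      destruct (L0 x) eqn:Hl; try (exfalso; apply (HT x Hx Hl)).
      - rewrite (Hv2 n0 x); auto.
      - rewrite (E1 _ _ Hl); auto. }
    assert (D1 : forall x, In x (fvs V1) -> L0 x <> None)
      by (intros x Hx; apply Hdom; simpl; rewrite !in_app_iff; tauto).
    assert (D2 : forall x, In x (fvs W1) -> L0 x <> None)
      by (intros x Hx; apply Hdom; simpl; rewrite !in_app_iff; tauto).
    assert (D3 : forall x, In x (fvs V2) -> L0 x <> None)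
      by (intros x Hx; apply Hdom; simpl; rewrite !in_app_iff; tauto).
    assert (D4 : forall x, In x (fvs W2) -> L0 x <> None)
      by (intros x Hx; apply Hdom; simpl; rewrite !in_app_iff; tauto).
    rewrite (proj1 (Hs V1 D1)), (proj1 (Hs W1 D2)), (proj2 (Hs V2 D3)), (proj2 (Hs W2 D4)).
    destruct (v c); reflexivity.
Qed.

Lemma head_case n k R C L R' C' L' E u :
  am_head n k R C L R' C' L' ->
  (forall x, In x (ctx_fvs E) -> L x <> None) ->
  (forall x, In x (fvs R) -> L x <> None) ->
  (k = KConst /\ fill (ctx_rfv (fL L (run n C u)) E) (replace_fv (fL L (run n C u)) R) =
     fill (ctx_rfv (fL L' (run n C' u)) E) (replace_fv (fL L' (run n C' u)) R'))
  \/ step (fill (ctx_rfv (fL L (run n C u)) E) (replace_fv (fL L (run n C u)) R))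
       (fill (ctx_rfv (fL L' (run n C' u)) E) (replace_fv (fL L' (run n C' u)) R'))
  \/ contains_err (fill E R').
Proof.
  intros Hh HE HR. destruct Hh as [R R' C L Hpr | C L z w Hz Hw | C L z w Hz Hw | C L p wp z w Hp Hz Hw | C L p q wp wq z w Hp Hq Hz Hw | C L p q wp wq z w Hp Hq Hz Hw | C L p wp V W U G L2 Hp HV HW Hs Hig | C L p wp V W Hp HV HW Hs].
  - right; left. exists (ctx_rfv (fL L (run n C u)) E), (replace_fv (fL L (run n C u)) R),
      (replace_fv (fL L (run n C u)) R').
    repeat split; auto. constructor. apply pure_rfv; auto.
  - left; split; auto. destruct Hw as (A & B & D).
    rewrite (ctx_frame L (run n C u) (upd L z w) (run n C u) E HE)
      by (apply frame_upd; auto).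
    f_equal. simpl. unfold fL, upd. rewrite Nat.eqb_refl, run_new; auto.
  - left; split; auto. destruct Hw as (A & B & D).
    pose proof (run_new n C u w A B) as Hvw.
    rewrite (ctx_frame L (run n C u) (upd L z w) _ E HE)
      by (apply frame_upd; auto; intros; rewrite run_cons, exec_other; auto).
    f_equal. simpl. unfold fL, upd. rewrite ?Nat.eqb_refl, ?run_cons. simpl.
    rewrite ?Nat.eqb_refl, ?Hvw. reflexivity.
  - right; left. destruct Hw as (A & B & D).
    pose proof (run_new n C u w A B) as Hvw.
    assert (Hpw : wp =? w = false) by (apply Nat.eqb_neq; intro; subst; apply (D p Hp)).
    rewrite (ctx_frame L (run n C u) (upd L z w) _ E HE)
      by (apply frame_upd; auto; intros; rewrite run_cons, exec_other; auto).
    exists (ctx_rfv (fL L (run n C u)) E), (App Not (of_bool (run n C u wp))),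
      (of_bool (negb (run n C u wp))).
    split; [|split].
    + simpl. unfold fL. rewrite Hp. reflexivity.
    + f_equal. simpl. unfold fL, upd. rewrite ?Nat.eqb_refl, ?run_cons.
      simpl. rewrite ?Nat.eqb_refl, ?Hvw, ?Hpw. destruct (run n C u wp); reflexivity.
    + apply H_not.
  - right; left. destruct Hw as (A & B & D).
    pose proof (run_new n C u w A B) as Hvw.
    assert (Hpw : wp =? w = false) by (apply Nat.eqb_neq; intro; subst; apply (D p Hp)).
    assert (Hqw : wq =? w = false) by (apply Nat.eqb_neq; intro; subst; apply (D q Hq)).
    rewrite (ctx_frame L (run n C u) (upd L z w) _ E HE)
      by (apply frame_upd; auto; intros; rewrite run_cons, exec_other; auto).
    exists (ctx_rfv (fL L (run n C u)) E),
      (App And (Pair (of_bool (run n C u wp)) (of_bool (run n C u wq)))),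
      (of_bool (run n C u wp && run n C u wq)).
    split; [|split].
    + simpl. unfold fL. rewrite Hp, Hq. reflexivity.
    + f_equal. simpl. unfold fL, upd. rewrite ?Nat.eqb_refl, ?run_cons.
      simpl. rewrite ?Nat.eqb_refl, ?Hvw, ?Hpw, ?Hqw.
      destruct (run n C u wp), (run n C u wq); reflexivity.
    + apply H_and.
  - right; left. destruct Hw as (A & B & D).
    pose proof (run_new n C u w A B) as Hvw.
    assert (Hpw : wp =? w = false) by (apply Nat.eqb_neq; intro; subst; apply (D p Hp)).
    assert (Hqw : wq =? w = false) by (apply Nat.eqb_neq; intro; subst; apply (D q Hq)).
    rewrite (ctx_frame L (run n C u) (upd L z w) _ E HE)
      by (apply frame_upd; auto; intros; rewrite !run_cons, !exec_other; auto).
    exists (ctx_rfv (fL L (run n C u)) E),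
      (App Xor (Pair (of_bool (run n C u wp)) (of_bool (run n C u wq)))),
      (of_bool (xorb (run n C u wp) (run n C u wq))).
    split; [|split].
    + simpl. unfold fL. rewrite Hp, Hq. reflexivity.
    + f_equal. simpl. unfold fL, upd. rewrite ?Nat.eqb_refl, ?run_cons.
      simpl. rewrite ?Nat.eqb_refl, ?Hvw, ?Hpw, ?Hqw.
      destruct (run n C u wp), (run n C u wq); reflexivity.
    + apply H_xor.
  - right; left.
    destruct (if_gen_props _ _ _ _ _ _ _ _ _ Hig) as (Ext & Tg & Fu).
    assert (Hfr : forall x w0, L x = Some w0 -> L2 x = Some w0 /\
                  run n (G ++ C) u w0 = run n C u w0).
    { intros x w0 Hx. split; auto. rewrite run_app. apply fold_other.
      intro Ht. apply (proj1 (Tg w0 Ht) x Hx). }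
    rewrite (ctx_frame L (run n C u) L2 _ E HE Hfr).
    rewrite run_app.
    rewrite (if_gen_sem _ _ _ _ _ _ _ _ _ Hig).
    2:{ exists p; auto. }
    2:{ intros x Hx. apply HR. simpl. rewrite !in_app_iff; tauto. }
    2:{ intros t Ht. destruct (Tg t Ht) as (A & B & D & _). apply run_new; auto. }
    destruct (run n C u wp) eqn:Hb.
    + exists (ctx_rfv (fL L (run n C u)) E),
        (If Tt (replace_fv (fL L (run n C u)) V) (replace_fv (fL L (run n C u)) W)),
        (replace_fv (fL L (run n C u)) V).
      split; [|split]; auto.
      * simpl. assert (Hf : fL L (run n C u) p = Some true) by (unfold fL; rewrite Hp, Hb; reflexivity). rewrite Hf. reflexivity.
      * first [apply H_if_tt | apply H_if_ff].
    + exists (ctx_rfv (fL L (run n C u)) E),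
        (If Ff (replace_fv (fL L (run n C u)) V) (replace_fv (fL L (run n C u)) W)),
        (replace_fv (fL L (run n C u)) W).
      split; [|split]; auto.
      * simpl. assert (Hf : fL L (run n C u) p = Some false) by (unfold fL; rewrite Hp, Hb; reflexivity). rewrite Hf. reflexivity.
      * first [apply H_if_tt | apply H_if_ff].
  - right; right. exists E; reflexivity.
Qed.

Theorem lemma1 (n m : nat) (M N : tm) (C C' : list gate) (L L' : lmap)
  (k : step_kind) (u : nat -> bool) :
  cgam n M C L m ->
  am_step n k M C L N C' L' ->
  (k = KConst /\ readback n C L M u = readback n C' L' N u)
  \/ step (readback n C L M u) (readback n C' L' N u)
  \/ contains_err N.
Proof.
  intros [Hty _] (E & R & R' & -> & -> & Hh).
  assert (Hdom : forall x, In x (fvs (fill E R)) -> L x <> None).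
  { intros x Hx Hn. apply (typed_fvs _ _ _ _ Hty x Hx). unfold ctx_of; rewrite Hn; reflexivity. }
  assert (HE : forall x, In x (ctx_fvs E) -> L x <> None)
    by (intros; apply Hdom, fvs_fill; auto).
  assert (HR : forall x, In x (fvs R) -> L x <> None)
    by (intros; apply Hdom, fvs_fill; auto).
  rewrite !readback_eq, !rfv_fill.
  exact (head_case _ _ _ _ _ _ _ _ _ _ Hh HE HR).
Qed.
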